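(* Let $k\in\mathbb{Z}$, let $p$ be a positive integer and let $m$ be an odd positive integer. Then $$S_{p}^{(k)}(1,m)=\sum_{\nu=0}^{p}\binom{p}{\nu}E_{\nu}^{(k)}\sum_{i=0}^{p-\nu}\binom{p-\nu+1}{i}E_{i}m^{p-i},$$ where $S_p^{(k)}(1,m):=m^{p}T_{p}^{(k)}(1,m)-2\sum_{\nu=0}^{p}\binom{p}{\nu}E_{\nu}^{(k)}E_{p+1-\nu}m^{\nu-1}$.
   Context: Euler polynomials $E_n(x)$ are defined by $\frac{2}{e^t+1}e^{xt}=\sum_{n=0}^{\infty}E_n(x)\frac{t^n}{n!}$ and $E_n=E_n(0)$. For $k\in\mathbb{Z}$, $\mathrm{Ei}_k(x)=\sum_{n=1}^{\infty}\frac{x^n}{n^k(n-1)!}$; the poly-Genocchi polynomials $G_n^{(k)}(x)$ are defined by $\frac{2\,\mathrm{Ei}_k(\log(1+t))}{e^t+1}e^{xt}=\sum_{n=0}^{\infty}G_n^{(k)}(x)\frac{t^n}{n!}$; the poly-Euler polynomials are $E_n^{(k)}(x)=\frac{G_{n+1}^{(k)}(x)}{n+1}$ ($n\ge0$), $E_n^{(k)}=E_n^{(k)}(0)$, and the poly-Euler functions are $\overline{E}_n^{(k)}(x)=E_n^{(k)}(x-[x])$, where $[x]$ is the greatest integer $\le x$. For positive integers $h,m,p$, the poly-Dedekind type DC sum is $T_p^{(k)}(h,m)=2\sum_{\mu=1}^{m-1}(-1)^{\mu}\frac{\mu}{m}\overline{E}_p^{(k)}\big(\frac{h\mu}{m}\big)$.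 *)

(* Defs.v *)
(* Generating functions are treated as formal power series
   (sequences nat -> R of coefficients of t^n). *)
From mathcomp Require Import all_boot all_order all_algebra.
Set Implicit Arguments. Unset Strict Implicit. Unset Printing Implicit Defensive.
Import Order.TTheory GRing.Theory Num.Theory.
Local Open Scope ring_scope.

Section FPS.
Variable R : archiRealFieldType.

Definition fps := nat -> R.

Definition fps_mul (f g : fps) : fps :=
  fun n => \sum_(i < n.+1) f i * g (n - i)%N.

Definition fps_scale (c : R) (f : fps) : fps := fun n => c * f n.

Fixpoint fps_pow (f : fps) (j : nat) : fps :=
  match j with
  | 0 => fun n => if n == 0%N then 1 else 0
  | j'.+1 => fps_mul f (fps_pow f j')
  end.

(* composition a(f(t)), for f with zero constant term *)
Definition fps_comp (a f : fps) : fps :=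
  fun n => \sum_(j < n.+1) a j * fps_pow f j n.

(* multiplicative inverse of a series with invertible constant term:
   list of the first n+1 coefficients *)
Fixpoint fps_inv_seq (f : fps) (n : nat) : seq R :=
  match n with
  | 0 => [:: (f 0%N)^-1]
  | n'.+1 => let s := fps_inv_seq f n' in
      rcons s (- (f 0%N)^-1 * \sum_(1 <= i < n'.+2) f i * nth 0 s (n'.+1 - i)%N)
  end.

Definition fps_inv (f : fps) : fps := fun n => nth 0 (fps_inv_seq f n) n.

Definition fps_exp (c : R) : fps := fun n => c ^+ n / (n`!)%:R.

Definition fps_expt_plus1 : fps :=
  fun n => fps_exp 1 n + (if n == 0%N then 1 else 0).

Definition fps_log1p : fps :=
  fun n => if n == 0%N then 0 else (-1) ^+ n.+1 / n%:R.

Definition fps_Ei (k : int) : fps :=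
  fun n => if n == 0%N then 0 else ((n%:R ^ k) * ((n.-1)`!)%:R)^-1.

Definition euler_poly (n : nat) (x : R) : R :=
  (n`!)%:R * fps_mul (fps_scale 2 (fps_inv fps_expt_plus1)) (fps_exp x) n.

Definition euler_num (n : nat) : R := euler_poly n 0.

Definition poly_genocchi (k : int) (n : nat) (x : R) : R :=
  (n`!)%:R * fps_mul (fps_mul (fps_scale 2 (fps_comp (fps_Ei k) fps_log1p))
                              (fps_inv fps_expt_plus1)) (fps_exp x) n.

Definition poly_euler (k : int) (n : nat) (x : R) : R :=
  poly_genocchi k n.+1 x / (n.+1)%:R.

Definition poly_euler_num (k : int) (n : nat) : R := poly_euler k n 0.

Definition poly_euler_fun (k : int) (n : nat) (x : R) : R :=
  poly_euler k n (x - (Num.floor x)%:~R).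

Definition polyDC_T (k : int) (p h m : nat) : R :=
  2 * \sum_(1 <= mu < m) (-1) ^+ mu * (mu%:R / m%:R)
        * poly_euler_fun k p ((h * mu)%:R / m%:R).

Definition polyDC_S (k : int) (p m : nat) : R :=
  m%:R ^+ p * polyDC_T k p 1 m
  - 2 * \sum_(nu < p.+1) 'C(p, nu)%:R * poly_euler_num k nu
          * euler_num (p.+1 - nu) * m%:R ^ (nu%:Z - 1).

End FPS.

(* Main.v *)
Require Import Defs.
From mathcomp Require Import all_boot all_order all_algebra.
From mathcomp Require Import ring lra zify.
Set Implicit Arguments. Unset Strict Implicit. Unset Printing Implicit Defensive.
Import Order.TTheory GRing.Theory Num.Theory.
Local Open Scope ring_scope.


Lemma sum_shift (R : archiRealFieldType) (F : nat -> R) i n : (i <= n)%N ->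
  \sum_(s < n.+1 | (i <= s)%N) F s = \sum_(j < (n-i).+1) F (j + i)%N.
Proof.
move=> hi.
have := @big_geq_mkord R 0 +%R i n.+1 xpredT F.
rewrite /= => <-.
rewrite -{1}(add0n i) big_addn big_mkord subSn //.
Qed.




Section Aux.
Variable R : archiRealFieldType.
Implicit Types f g h : fps R.

Lemma fps_mulC f g n : fps_mul f g n = fps_mul g f n.
Proof.
rewrite /fps_mul (reindex_inj rev_ord_inj) /=.
apply: eq_bigr => i _; rewrite subSS subKn; first by rewrite mulrC.
by rewrite -ltnS.
Qed.

Lemma fps_mulA f g h n :
  fps_mul f (fps_mul g h) n = fps_mul (fps_mul f g) h n.
Proof.
rewrite /fps_mul.
transitivity (\sum_(i < n.+1) \sum_(s < n.+1 | (i <= s)%N)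
   f i * (g (s - i)%N * h (n - s)%N)).
  apply: eq_bigr => i _; rewrite mulr_sumr (sum_shift (fun s => f i * (g (s - i)%N * h (n - s)%N))); last by rewrite -ltnS.
  apply: eq_bigr => j _; rewrite addnK; congr (_ * (_ * h _)); lia.
rewrite (eq_bigr (fun i : 'I_n.+1 => \sum_(s < n.+1) if (i <= s)%N then f i * (g (s - i)%N * h (n - s)%N) else 0)); last by move=> i _; rewrite big_mkcond.
rewrite exchange_big /=; apply: eq_bigr => s _; rewrite mulr_suml.
rewrite (@big_ord_widen _ _ _ s.+1 n.+1 (fun i => f i * g (s - i)%N * h (n - s)%N)); last by case: s.
rewrite [RHS]big_mkcond; apply: eq_bigr => i _; rewrite ltnS; case: ifP => // _; by rewrite mulrA.
Qed.

Lemma fps_exp_add (x y : R) n :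
  fps_exp (x + y) n = fps_mul (fps_exp x) (fps_exp y) n.
Proof.
rewrite /fps_exp /fps_mul addrC exprDn mulr_suml; apply: eq_bigr => i _.
have hi : (i <= n)%N by rewrite -ltnS.
rewrite -mulr_natr -(bin_fact hi) !natrM.
have h1 : (i`!)%:R != 0 :> R by rewrite pnatr_eq0 -lt0n fact_gt0.
have h2 : ((n-i)`!)%:R != 0 :> R by rewrite pnatr_eq0 -lt0n fact_gt0.
have h3 : ('C(n,i))%:R != 0 :> R by rewrite pnatr_eq0 -lt0n bin_gt0.
field; rewrite h1 h2 h3 //.
Qed.


Lemma size_inv_seq f n : size (fps_inv_seq f n) = n.+1.
Proof. by elim: n => [|n IH] //=; rewrite size_rcons IH. Qed.

Lemma inv_prefix f n d i : (i <= n)%N ->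
  nth 0 (fps_inv_seq f (n + d)) i = nth 0 (fps_inv_seq f n) i.
Proof.
move=> hi; elim: d => [|d IH]; first by rewrite addn0.
by rewrite addnS /= nth_rcons size_inv_seq ltnS (leq_trans hi (leq_addr _ _)).
Qed.

Lemma inv_nth f n i : (i <= n)%N -> nth 0 (fps_inv_seq f n) i = fps_inv f i.
Proof. by move=> hi; rewrite /fps_inv -(subnKC hi) inv_prefix. Qed.

Lemma fps_invP f n : f 0%N != 0 -> fps_mul f (fps_inv f) n = (n == 0%N)%:R.
Proof.
move=> f0; case: n => [|n].
  by rewrite /fps_mul big_ord1 /fps_inv /= mulfV.
rewrite /fps_mul big_ord_recl /=.
have -> : fps_inv f n.+1 = - (f 0%N)^-1 *
   \sum_(1 <= i < n.+2) f i * fps_inv f (n.+1 - i)%N.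
  rewrite /fps_inv /= nth_rcons size_inv_seq ltnn eqxx; congr (_ * _).
  rewrite !big_nat; apply: eq_bigr => i /andP[hi _]; rewrite inv_nth //.
  lia.
rewrite big_add1 /= big_mkord.
under [X in _ + X]eq_bigr => i _ do rewrite /bump /= add1n subSS.
rewrite mulrA mulrN mulfV // mulN1r; apply/eqP; rewrite addrC subr_eq0; apply/eqP; apply: eq_bigr => i _; by rewrite subSS.
Qed.

Lemma fact_neq0 n : (n`!)%:R != 0 :> R.
Proof. by rewrite pnatr_eq0 -lt0n fact_gt0. Qed.

Lemma mul_exp0 f n : fps_mul f (fps_exp 0) n = f n.
Proof.
rewrite /fps_mul big_ord_recr /= subnn /fps_exp expr0 divr1 mulr1 big1 ?add0r //.
move=> i _; rewrite expr0n; case: eqP => [|_]; last by rewrite mul0r mulr0.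
move=> h; have := ltn_ord i; lia.
Qed.

Lemma appell f n (x : R) : n`!%:R * fps_mul f (fps_exp x) n =
  \sum_(j < n.+1) 'C(n, j)%:R * (j`!%:R * f j) * x ^+ (n - j).
Proof.
rewrite /fps_mul mulr_sumr; apply: eq_bigr => j _.
have hj : (j <= n)%N by rewrite -ltnS.
rewrite /fps_exp -(bin_fact hj) !natrM.
have := fact_neq0 (n - j); move: (((n-j)`!)%:R) => F hF.
by field.
Qed.
End Aux.

Section Aux.
Variable R : archiRealFieldType.
Implicit Types f g h : fps R.

Definition ea : fps R := fps_scale 2 (fps_inv (fps_expt_plus1 R)).

Lemma euler_num_E j : euler_num R j = j`!%:R * ea j.
Proof. by rewrite /euler_num /euler_poly mul_exp0. Qed.

Lemma euler_poly_E n x : euler_poly n x =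
  \sum_(j < n.+1) 'C(n, j)%:R * euler_num R j * x ^+ (n - j).
Proof.
rewrite /euler_poly appell; apply: eq_bigr => j _; by rewrite euler_num_E.
Qed.

Lemma ea_c n : fps_mul ea (fps_expt_plus1 R) n = 2 * (n == 0%N)%:R.
Proof.
rewrite fps_mulC -(@fps_invP R (fps_expt_plus1 R)).
  rewrite /fps_mul mulr_sumr; apply: eq_bigr => i _.
  by rewrite /ea /fps_scale mulrCA.
rewrite /fps_expt_plus1 /fps_exp /= expr0 divr1; apply/eqP; lra.
Qed.

Lemma c_mul g n : fps_mul (fps_expt_plus1 R) g n = fps_mul (fps_exp 1) g n + g n.
Proof.
rewrite /fps_mul /fps_expt_plus1.
under eq_bigr => i _ do rewrite mulrDl.
rewrite big_split /=; congr (_ + _).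
rewrite big_ord_recl /= subn0 mul1r big1 ?addr0 // => i _.
by rewrite mul0r.
Qed.

Lemma euler_shift n (x : R) : euler_poly n (x + 1) + euler_poly n x = 2 * x ^+ n.
Proof.
rewrite /euler_poly -mulrDr.
have -> : fps_mul (fps_scale 2 (fps_inv (fps_expt_plus1 R))) (fps_exp (x + 1)) n
   + fps_mul (fps_scale 2 (fps_inv (fps_expt_plus1 R))) (fps_exp x) n
   = fps_mul ea (fps_mul (fps_expt_plus1 R) (fps_exp x)) n.
  rewrite {1 2}/fps_mul -big_split; apply: eq_bigr => i _.
  by rewrite /= -mulrDr c_mul addrC fps_exp_add fps_mulC addrC.
rewrite fps_mulA {1}/fps_mul big_ord_recl /= ea_c subn0 /= mulr1 big1 ?addr0.
  rewrite /fps_exp; have := fact_neq0 R n; move: (n`!)%:R => F hF; by field.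
by move=> i _; rewrite ea_c /= mulr0 mul0r.
Qed.
End Aux.

Section Aux.
Variable R : archiRealFieldType.
Implicit Types f g h : fps R.

Lemma alt_sum n M : 2 * \sum_(i < M) (-1) ^+ i * (i%:R : R) ^+ n =
  euler_num R n - (-1) ^+ M * euler_poly n (M%:R : R).
Proof.
elim: M => [|M IH].
  by rewrite big_ord0 expr0 mul1r /euler_num subrr mulr0.
rewrite big_ord_recr /= mulrDr IH.
have -> : ((M.+1)%:R : R) = M%:R + 1 by rewrite natr1.
have := euler_shift n (M%:R : R) => hs.
have -> : euler_poly n (M%:R + 1 : R) = 2 * (M%:R : R) ^+ n - euler_poly n (M%:R : R) by rewrite -hs addrK.
rewrite exprS; ring.
Qed.

Lemma alt_sum_odd n m : (0 < n)%N -> odd m ->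
  2 * \sum_(1 <= mu < m) (-1) ^+ mu * (mu%:R : R) ^+ n =
  euler_num R n + euler_poly n (m%:R : R).
Proof.
move=> n0 om.
have m0 : (0 < m)%N by case: m om.
have := alt_sum n m; rewrite -signr_odd om expr1 mulN1r opprK => <-.
congr (_ * _); rewrite big_geq_mkord big_mkcond [RHS]big_mkcond.
apply: eq_bigr => i _ /=; case: i => [[|i]] //= _.
by rewrite expr0n; case: n n0 => // n _; rewrite mulr0.
Qed.

Definition pgB (k : int) : fps R :=
  fps_mul (fps_scale 2 (fps_comp (fps_Ei R k) (fps_log1p R))) (fps_inv (fps_expt_plus1 R)).

Lemma pgB0 k : pgB k 0%N = 0.
Proof. by rewrite /pgB /fps_mul big_ord1 /fps_scale /fps_comp big_ord1 /fps_Ei /= !mul0r mulr0 mul0r. Qed.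

Lemma poly_euler_num_E k j : poly_euler_num R k j = j`!%:R * pgB k j.+1.
Proof.
rewrite /poly_euler_num /poly_euler /poly_genocchi -/(pgB k) mul_exp0 factS natrM.
have h : (j.+1)%:R != 0 :> R by rewrite pnatr_eq0.
move: h; move: ((j.+1)%:R) => a ha; by field.
Qed.

Lemma poly_euler_E k n (x : R) : poly_euler k n x =
  \sum_(j < n.+1) 'C(n, j)%:R * poly_euler_num R k j * x ^+ (n - j).
Proof.
rewrite /poly_euler /poly_genocchi -/(pgB k).
have -> : fps_mul (pgB k) (fps_exp x) n.+1 = fps_mul (fun i => pgB k i.+1) (fps_exp x) n.
  rewrite {1}/fps_mul big_ord_recl pgB0 mul0r add0r; apply: eq_bigr => i _.
  by rewrite subSS.
rewrite factS natrM.
have h : (n.+1)%:R != 0 :> R by rewrite pnatr_eq0.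
move: h; move: ((n.+1)%:R) => a ha.
have -> : a * n`!%:R * fps_mul (fun i => pgB k i.+1) (fps_exp x) n / a = n`!%:R * fps_mul (fun i => pgB k i.+1) (fps_exp x) n by field.
rewrite appell.
by apply: eq_bigr => j _; rewrite poly_euler_num_E.
Qed.
End Aux.


Lemma mpowz (R : archiRealFieldType) (m nu : nat) : (0 < m)%N ->
  (m%:R : R) ^ (nu%:Z - 1) = m%:R ^+ nu / m%:R.
Proof.
move=> m0; have hm : (m%:R : R) != 0 by rewrite pnatr_eq0 -lt0n.
by rewrite expfzDr // -exprnP -invr_expz expr1z.
Qed.

Lemma floor_frac (R : archiRealFieldType) k p (mu m : nat) : (mu < m)%N ->
  poly_euler_fun k p (((1 * mu)%N)%:R / (m%:R : R)) = poly_euler k p (mu%:R / m%:R).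
Proof.
move=> hmu; have m0 : (0 < m)%N by case: m hmu.
have hm : (0 : R) < m%:R by rewrite ltr0n.
rewrite /poly_euler_fun mul1n (@floor_def _ _ 0) ?subr0 //.
rewrite /= add0r ler_pdivlMr // mul0r ler0n /= ltr_pdivrMr // mul1r ltr_nat //.
Qed.

Lemma mT (R : archiRealFieldType) k p m : (0 < m)%N ->
  (m%:R : R) ^+ p * polyDC_T R k p 1 m =
  \sum_(nu < p.+1) 'C(p, nu)%:R * poly_euler_num R k nu * (m%:R ^+ nu / m%:R) *
     (2 * \sum_(1 <= mu < m) (-1) ^+ mu * (mu%:R : R) ^+ (p - nu).+1).
Proof.
move=> m0; have hm : (m%:R : R) != 0 by rewrite pnatr_eq0 -lt0n.
rewrite /polyDC_T.
rewrite big_nat_cond.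
under eq_bigr => mu /andP[/andP[_ hmu] _] do rewrite floor_frac // poly_euler_E mulr_sumr.
rewrite -big_nat_cond exchange_big mulr_sumr mulr_sumr; apply: eq_bigr => nu _.
rewrite mulrA [RHS]mulrA !big_distrr /=; apply: eq_bigr => mu _.
have hnu : (nu <= p)%N by rewrite -ltnS.
rewrite -{1}(subnK hnu) exprD exprS expr_div_n.
have hb : (m%:R : R) ^+ (p - nu) != 0 by rewrite expf_neq0.
move: hb; move: (m%:R ^+ (p - nu)) (m%:R ^+ nu) (mu%:R ^+ (p - nu)) => b c ub hb.
move: hm; move: (m%:R : R) => a ha; by field; rewrite ha hb.
Qed.


Unset Implicit Arguments. Set Strict Implicit.


Theorem theorem10 (R : archiRealFieldType) (k : int) (p m : nat) :
  (0 < p)%N -> (0 < m)%N -> odd m ->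
  polyDC_S R k p m =
  \sum_(nu < p.+1) 'C(p, nu)%:R * poly_euler_num R k nu *
    \sum_(i < (p - nu).+1) 'C((p - nu).+1, i)%:R * euler_num R i * m%:R ^+ (p - i).
Proof.
move=> p0 m0 om.
have hm : (m%:R : R) != 0 by rewrite pnatr_eq0 -lt0n.
rewrite /polyDC_S mT // mulr_sumr -sumrB; apply: eq_bigr => nu _.
have hnu : (nu <= p)%N by rewrite -ltnS.
rewrite alt_sum_odd // euler_poly_E big_ord_recr /= subnn expr0 binn mulr1 mul1r.
rewrite mpowz // subSn //.
set X := \sum_(i < (p - nu).+1) _.
have hX : (m%:R ^+ nu / m%:R) * X = \sum_(i < (p - nu).+1)
   'C((p - nu).+1, i)%:R * euler_num R i * (m%:R : R) ^+ (p - i).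
  rewrite /X mulr_sumr; apply: eq_bigr => i _.
  have hi : (i <= p - nu)%N by rewrite -ltnS.
  rewrite subSn // exprS.
  have -> : (p - i = (p - nu - i) + nu)%N by lia.
  rewrite exprD; move: hm; move: (m%:R : R) => a ha; by field.
rewrite -hX; ring.
Qed.
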